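(* Let $n$ be a positive integer and $N=2^n$. Let $\delta,\alpha\in(0,1]$ be real numbers with $32\delta^2\le\alpha\le\delta/2$, $\alpha\ge N^{-2^{-300}}$, $\alpha\le2^{-30}$, and $$\frac{\delta}{\alpha}\log\frac{1}{2\alpha}\ge400\log N\cdot\log(8\log N).$$ Then there exists a set $A\subseteq\mathbb{Z}_2^n$ such that $\delta N\le|A|\le8\delta N$, $|\mathcal{R}_\alpha(A)|\ge\frac{\delta}{8\alpha^2}$ and $T_2(\mathcal{R}_\alpha(A))\le\frac{16\delta}{\alpha^4}$.
   Context: $\mathbb{Z}_2^n=(\mathbb{Z}/2\mathbb{Z})^n$ with inner product $\langle\vec x,\vec y\rangle=x_1y_1+\dots+x_ny_n\pmod 2$; $\log$ is the logarithm to base $2$. For $f:\mathbb{Z}_2^n\to\mathbb{C}$, $\widehat f(\vec r)=\sum_{\vec x}(-1)^{\langle\vec r,\vec x\rangle}f(\vec x)$; $A(\vec x)$ is the indicator of $A$, and $\mathcal{R}_\alpha(A)=\{\vec r:|\widehat A(\vec r)|\ge\alpha N\}$. For $B\subseteq\mathbb{Z}_2^n$, $T_2(B)=|\{(r_1,r_2,r_3,r_4)\in B^4: r_1+r_2=r_3+r_4\}|$. *)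

(* Defs.v *)
From mathcomp Require Import all_boot all_order all_algebra.
From mathcomp Require Import all_classical all_reals all_analysis.
Set Implicit Arguments. Unset Strict Implicit. Unset Printing Implicit Defensive.
Import Order.TTheory GRing.Theory Num.Theory.
Local Open Scope ring_scope.

(* Z_2^n is represented as {ffun 'I_n -> bool} (bit vectors, addition = xor). *)
Definition vec (n : nat) := {ffun 'I_n -> bool}.

Definition vadd n (x y : vec n) : vec n := [ffun i => xorb (x i) (y i)].

Definition ip n (x y : vec n) : bool := odd #|[set i | x i && y i]|.

Definition sgn (R : pzRingType) (b : bool) : R := if b then -1 else 1.

Definition fourier (R : pzRingType) n (A : {set vec n}) (r : vec n) : R :=
  \sum_(x in A) sgn R (ip r x).

Definition spec (R : realType) n (alpha : R) (A : {set vec n}) : {set vec n} :=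
  [set r | alpha * (2 ^+ n)%:R <= `| fourier R A r |].

Definition T2 n (B : {set vec n}) : nat :=
  #|[set q : vec n * vec n * vec n * vec n |
      [&& q.1.1.1 \in B, q.1.1.2 \in B, q.1.2 \in B, q.2 \in B &
          vadd q.1.1.1 q.1.1.2 == vadd q.1.2 q.2]]|.

Definition log2 (R : realType) (x : R) : R := ln x / ln 2.

(* Main.v *)
Require Import Defs.
From mathcomp Require Import all_boot all_order all_algebra all_field.
From mathcomp Require Import all_classical all_reals all_analysis.
From mathcomp Require Import zify ring lra.
From Stdlib Require Import Lia.
Set Implicit Arguments. Unset Strict Implicit. Unset Printing Implicit Defensive.
Import Order.TTheory GRing.Theory Num.Theory.
Local Open Scope ring_scope.

Section Vec.
Variable n : nat.
Definition vzero : vec n := [ffun _ => false].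

Lemma vaddC (x y : vec n) : vadd x y = vadd y x.
Proof. by apply/ffunP=> i; rewrite /vadd !ffunE; by case: (x i); case: (y i). Qed.
Lemma vaddA (x y z : vec n) : vadd x (vadd y z) = vadd (vadd x y) z.
Proof. by apply/ffunP=> i; rewrite /vadd !ffunE; by case: (x i); case: (y i); case: (z i). Qed.
Lemma vadd0 (x : vec n) : vadd x vzero = x.
Proof. by apply/ffunP=> i; rewrite /vadd !ffunE; by case: (x i). Qed.
Lemma vaddvv (x : vec n) : vadd x x = vzero.
Proof. by apply/ffunP=> i; rewrite /vadd !ffunE; by case: (x i). Qed.
Lemma vaddK (x y : vec n) : vadd (vadd x y) y = x.
Proof. by rewrite -vaddA vaddvv vadd0. Qed.
Lemma vadd_eq0 (x y : vec n) : (vadd x y == vzero) = (x == y).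
Proof.
apply/eqP/eqP=> [h|->]; last exact: vaddvv.
by rewrite -(vaddK x y) h vaddC vadd0.
Qed.

Lemma ipC (x y : vec n) : ip x y = ip y x.
Proof.
rewrite /ip; have -> : [set i | x i && y i] = [set i | y i && x i] by apply/setP=> i; rewrite !inE andbC.
by [].
Qed.

Lemma ip_addl (a b y : vec n) : ip (vadd a b) y = xorb (ip a y) (ip b y).
Proof.
rewrite /ip.
set Sa := [set i | a i && y i]; set Sb := [set i | b i && y i].
have -> : [set i | vadd a b i && y i] = (Sa :|: Sb) :\: (Sa :&: Sb).
  apply/setP=> i; rewrite /vadd !inE !ffunE.
  by case: (a i); case: (b i); case: (y i).
rewrite cardsD.
have -> : (Sa :|: Sb) :&: (Sa :&: Sb) = Sa :&: Sb.
  by apply/setP=> i; rewrite !inE; case: (a i); case: (b i); case: (y i).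
have h := cardsUI Sa Sb.
have hle : (#|Sa :&: Sb| <= #|Sa :|: Sb|)%N.
  by apply: subset_leq_card; apply/fintype.subsetP=> i; rewrite !inE => /andP[->].
have -> : (#|Sa :|: Sb| - #|Sa :&: Sb| = (#|Sa| + #|Sb|) - 2 * #|Sa :&: Sb|)%N.
  by rewrite -h; lia.
rewrite oddB; last by rewrite -h; lia.
rewrite oddD oddM /=. by case: (odd #|Sa|); case: (odd #|Sb|).
Qed.

Lemma ip_addr (a b y : vec n) : ip y (vadd a b) = xorb (ip y a) (ip y b).
Proof. by rewrite ipC ip_addl !(ipC y). Qed.

Lemma ip0l (y : vec n) : ip vzero y = false.
Proof.
by rewrite /ip (_ : [set i | vzero i && y i] = finset.set0) ?cards0 //; apply/setP=> i; rewrite !inE ffunE.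
Qed.
Lemma ip0r (y : vec n) : ip y vzero = false.
Proof. by rewrite ipC ip0l. Qed.

Definition unitv (i : 'I_n) : vec n := [ffun j => j == i].
Lemma ip_unit (s : vec n) i : ip s (unitv i) = s i.
Proof.
rewrite /ip; case si: (s i).
  rewrite (_ : [set j | s j && unitv i j] = [set i]) ?cards1 //.
  by apply/setP=> j; rewrite !inE ffunE; case: eqP => [->|_]; rewrite ?si ?andbF ?andbT.
rewrite (_ : [set j | s j && unitv i j] = finset.set0) ?cards0 //.
by apply/setP=> j; rewrite !inE ffunE; case: eqP => [->|_]; rewrite ?si ?andbF ?andbT.
Qed.

Variable R : realType.

Lemma sgn_add (a b : bool) : sgn R (xorb a b) = sgn R a * sgn R b.
Proof. by case: a; case: b; rewrite /sgn /= ?mulrNN ?mul1r ?mulr1 ?mulN1r. Qed.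
Lemma sgn_true : sgn R true = -1. Proof. by []. Qed.
Lemma sgn_false : sgn R false = 1. Proof. by []. Qed.
Lemma norm_sgn b : `|sgn R b| = 1.
Proof. by case: b; rewrite /sgn ?normrN normr1. Qed.

Lemma card_vec : #|{: vec n}| = (2 ^ n)%N.
Proof. by rewrite card_ffun card_bool card_ord. Qed.

Lemma orth (s : vec n) :
  \sum_(y : vec n) sgn R (ip s y) = ((s == vzero)%:R * (2 ^ n)%:R).
Proof.
case: eqP => [->|/eqP hs].
  rewrite mul1r (eq_bigr (fun _ => 1)); last by move=> y _; rewrite ip0l.
  by rewrite sumr_const card_vec.
rewrite mul0r.
have [i si] : exists i, s i.
  apply/existsP; apply: contraR hs; rewrite negb_exists => /forallP h.
  by apply/eqP/ffunP=> j; rewrite ffunE; apply/negbTE/h.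
set S := \sum_y _.
have : S = - S.
  have e : S = \sum_y sgn R (ip s (vadd y (unitv i))).
    pose h := fun y : vec n => vadd y (unitv i).
    have hK : cancel h h by move=> y; exact: vaddK.
    exact: (reindex_inj (can_inj hK)).
  rewrite {1}e /S -sumrN; apply: eq_bigr => y _.
  by rewrite ip_addr ip_unit si sgn_add sgn_true mulrN1.
move=> h; lra.
Qed.
End Vec.

Section HomSum.
Variable R : realType.
Lemma hom_sum (G : finZmodType) (h : G -> bool) :
  (forall x y, h (x + y) = xorb (h x) (h y)) ->
  \sum_(x : G) sgn R (h x) = ([forall x, ~~ h x])%:R * #|G|%:R.
Proof.
move=> hD.
case: forallP => [hall|/forallP hn].
  rewrite mul1r (eq_bigr (fun _ => 1)); last by move=> x _; rewrite (negbTE (hall x)).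
  by rewrite sumr_const.
rewrite mul0r.
have [x0 hx0] : exists x0, h x0.
  apply/existsP; apply: contraR hn; rewrite negb_exists => /forallP h'.
  by apply/forallP.
set S := \sum_x _.
have : S = - S.
  have e : S = \sum_x sgn R (h (x + x0)).
    pose f := fun x : G => x + x0.
    have fK : cancel f (fun x => x - x0) by move=> x; rewrite /f addrK.
    exact: (reindex_inj (can_inj fK)).
  rewrite {1}e /S -sumrN; apply: eq_bigr => y _.
  by rewrite hD hx0 sgn_add sgn_true mulrN1.
move=> h'; lra.
Qed.
End HomSum.

Lemma sum_le1 (T : finType) (P : pred T) :
  (forall x y, P x -> P y -> x = y) -> (\sum_(x : T) (P x : nat) <= 1)%N.
Proof.
move=> hP; case: (pickP P) => [x0 Px0|none].
  rewrite (bigD1 x0) //= big1 ?Px0 // => y /negbTE ny.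
  by case Py: (P y) => //; rewrite (hP _ _ Py Px0) eqxx in ny.
by rewrite big1 // => x _; rewrite none.
Qed.

Lemma sum2_le1 (T1 T2 : finType) (P : T1 -> T2 -> bool) :
  (forall x y x' y', P x y -> P x' y' -> x = x' /\ y = y') ->
  (\sum_(x : T1) \sum_(y : T2) (P x y : nat) <= 1)%N.
Proof.
move=> hP; rewrite pair_bigA /=.
apply: (sum_le1 (P := fun p => P p.1 p.2)) => [[x y] [x' y']] /= h1 h2.
by case: (hP _ _ _ _ h1 h2) => -> ->.
Qed.

Section Construction.
Variables (F : finFieldType) (d n k : nat) (bn : F -> nat -> bool).
Hypothesis bnD : forall x y j, bn (x + y) j = xorb (bn x j) (bn y j).
Hypothesis bn0 : forall x, (forall j, (j < d)%N -> bn x j = false) -> x = 0.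
Hypothesis hdn : (3 * d <= n)%N.
Variable lam : 'I_k -> F.
Hypothesis lam_inj : injective lam.

Lemma char2 (x : F) : x + x = 0.
Proof. by apply: bn0 => j _; rewrite bnD; case: (bn x j). Qed.
Lemma oppF (x : F) : - x = x.
Proof. by apply/eqP; rewrite eq_sym -subr_eq0 opprK char2. Qed.

Definition emb (x y z : F) : vec n :=
  [ffun i : 'I_n => if (i < d)%N then bn x i else if (i < 2 * d)%N then bn y (i - d)
     else if (i < 3 * d)%N then bn z (i - 2 * d) else false].

Lemma emb_add x y z x' y' z' :
  emb (x + x') (y + y') (z + z') = vadd (emb x y z) (emb x' y' z').
Proof.
apply/ffunP=> i; rewrite /vadd !ffunE.
by case: ifP => _; rewrite ?bnD //; case: ifP => _; rewrite ?bnD //; case: ifP.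
Qed.

Lemma emb_eq0 x y z : emb x y z = vzero n -> [/\ x = 0, y = 0 & z = 0].
Proof.
move=> h.
have ev : forall i (hi : (i < n)%N), emb x y z (Ordinal hi) = false.
  by move=> i hi; rewrite h ffunE.
split; apply: bn0 => j hj.
- have hi : (j < n)%N by lia.
  by have := ev _ hi; rewrite ffunE /= hj.
- have hi : (d + j < n)%N by lia.
  have := ev _ hi; rewrite ffunE /=.
  have -> : (d + j < d)%N = false by lia.
  have -> : (d + j < 2 * d)%N = true by lia.
  by rewrite addKn.
- have hi : (2 * d + j < n)%N by lia.
  have := ev _ hi; rewrite ffunE /=.
  have -> : (2 * d + j < d)%N = false by lia.
  have -> : (2 * d + j < 2 * d)%N = false by lia.
  have -> : (2 * d + j < 3 * d)%N = true by lia.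
  by rewrite addKn.
Qed.

Lemma bn_zero j : bn 0 j = false.
Proof. by have := bnD 0 0 j; rewrite addr0; case: (bn 0 j). Qed.

Lemma emb0 : emb 0 0 0 = vzero n.
Proof. by apply/ffunP=> i; rewrite /vzero !ffunE !bn_zero !if_same. Qed.

Definition phi (a x : F) : vec n := emb x (a * x) (a * a * x).

Lemma phi_add a x y : phi a (x + y) = vadd (phi a x) (phi a y).
Proof. by rewrite /phi !mulrDr emb_add. Qed.

Lemma phi0 a : phi a 0 = vzero n.
Proof. by rewrite /phi !mulr0 emb0. Qed.

Lemma phi_eq0 a x : phi a x = vzero n -> x = 0.
Proof. by case/emb_eq0. Qed.

Lemma phi_inj a : injective (phi a).
Proof.
move=> x y h; apply/eqP; rewrite -subr_eq0 oppF; apply/eqP; apply: (@phi_eq0 a).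
by rewrite phi_add h vaddvv.
Qed.

Lemma pair_indep a b x y : a != b ->
  vadd (phi a x) (phi b y) = vzero n -> x = 0 /\ y = 0.
Proof.
move=> ab; rewrite /phi -emb_add => /emb_eq0 [h1 h2 _].
have hy : y = x by apply/eqP; rewrite -subr_eq0 oppF addrC h1.
subst y.
have : (a - b) * x = 0 by rewrite mulrBl oppF h2.
by move/eqP; rewrite mulf_eq0 subr_eq0 (negbTE ab) /= => /eqP ->.
Qed.

Lemma triple_indep a b c x y z : a != b -> b != c -> a != c ->
  vadd (vadd (phi a x) (phi b y)) (phi c z) = vzero n -> [/\ x = 0, y = 0 & z = 0].
Proof.
move=> ab bc ac; rewrite /phi -!emb_add => /emb_eq0 [h1 h2 h3].
have hz : z = x + y by apply/eqP; rewrite -subr_eq0 oppF addrC h1.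
subst z.
have e1 : (a - c) * x + (b - c) * y = 0.
  by rewrite !mulrBl !oppF -h2 mulrDr; rewrite -!addrA; congr (_ + _);
     rewrite addrC -!addrA; congr (_ + _); rewrite addrC.
have e2 : (a * a - c * c) * x + (b * b - c * c) * y = 0.
  by rewrite !mulrBl !oppF -h3 mulrDr; rewrite -!addrA; congr (_ + _);
     rewrite addrC -!addrA; congr (_ + _); rewrite addrC.
have e3 : (a - c) * (a - b) * x = 0.
  have : (b + c) * ((a - c) * x + (b - c) * y) - ((a * a - c * c) * x + (b * b - c * c) * y) = 0.
    by rewrite e1 e2 mulr0 subr0.
  move=> h; apply/eqP; rewrite -oppr_eq0 -h; apply/eqP; ring.
have hx : x = 0.
  by move/eqP: e3; rewrite !mulf_eq0 !subr_eq0 (negbTE ab) (negbTE ac) /= => /eqP.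
subst x; rewrite mulr0 add0r in e1.
have hy : y = 0.
  by move/eqP: e1; rewrite mulf_eq0 subr_eq0 (negbTE bc) /= => /eqP.
by subst y; rewrite addr0.
Qed.


Variable R : realType.
Definition H a : {set vec n} := [set y | [forall x, ~~ ip (phi a x) y]].
Definition U a : {set vec n} := [set phi a x | x : F].
Local Notation q := (#|F|%:R : R).
Local Notation N := ((2 ^ n)%N%:R : R).

Lemma indic a y : (y \in H a)%:R * q = \sum_x sgn R (ip (phi a x) y).
Proof.
rewrite (@hom_sum R _ (fun x => ip (phi a x) y)); last by move=> x x'; rewrite phi_add ip_addl.
by rewrite inE.
Qed.

Lemma sgn_ip_add (u v y : vec n) : sgn R (ip u y) * sgn R (ip v y) = sgn R (ip (vadd u v) y).
Proof. by rewrite ip_addl sgn_add. Qed.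

Lemma sum_phi_eq a r : \sum_x ((phi a x == r)%:R : R) = (r \in U a)%:R.
Proof.
case: (boolP (r \in U a)) => [/imsetP [x0 _ ->] | nr].
  rewrite (bigD1 x0) //= eqxx big1 ?addr0 // => x /negbTE.
  by rewrite (inj_eq (@phi_inj a)) => ->.
rewrite big1 // => x _; case: eqP => // ex.
by rewrite -ex imset_f ?inE in nr.
Qed.

Lemma FH a r : q * \sum_(y in H a) sgn R (ip r y) = N * (r \in U a)%:R.
Proof.
rewrite big_mkcond mulr_sumr /=.
transitivity (\sum_y \sum_x sgn R (ip (phi a x) y) * sgn R (ip r y)).
  apply: eq_bigr => y _; rewrite -mulr_suml -indic.
  by case: (y \in H a); rewrite ?mulr1 ?mul1r ?mulr0 ?mul0r // mulrC.
rewrite exchange_big /=.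
transitivity (\sum_x ((phi a x == r)%:R * N)).
  apply: eq_bigr => x _.
  rewrite (eq_bigr (fun y => sgn R (ip (vadd (phi a x) r) y))); last by move=> y _; rewrite sgn_ip_add.
  by rewrite orth vadd_eq0.
by rewrite -mulr_suml sum_phi_eq mulrC.
Qed.

Lemma card_H a : #|H a|%:R * q = N.
Proof.
have := FH a (vzero n).
rewrite (eq_bigr (fun _ => 1)); last by move=> y _; rewrite ip0l.
rewrite sumr_const (_ : vzero n \in U a) ?mulr1; first by rewrite mulrC.
by apply/imsetP; exists 0 => //; rewrite phi0.
Qed.

Lemma card_HH a b : a != b ->
  (\sum_y ((y \in H a)%:R * (y \in H b)%:R : R)) * (q * q) = N.
Proof.
move=> ab; rewrite mulr_suml.
transitivity (\sum_y (\sum_x sgn R (ip (phi a x) y)) * (\sum_z sgn R (ip (phi b z) y))).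
  by apply: eq_bigr => y _; rewrite -!indic; ring.
transitivity (\sum_y \sum_x \sum_z sgn R (ip (vadd (phi a x) (phi b z)) y)).
  apply: eq_bigr => y _; rewrite mulr_suml; apply: eq_bigr => x _.
  by rewrite mulr_sumr; apply: eq_bigr => z _; rewrite sgn_ip_add.
rewrite exchange_big /=.
transitivity (\sum_(x : F) \sum_(z : F) (((x == 0) && (z == 0))%:R * N)).
  apply: eq_bigr => x _; rewrite exchange_big /=; apply: eq_bigr => z _.
  rewrite orth; congr (_%:R * _).
  case: eqP => [/(pair_indep ab) [-> ->]|ne]; first by rewrite !eqxx.
  case: eqP => // ex; case: eqP => // ez.
  by subst; rewrite !phi0 vaddvv in ne.
have e : forall x : F, \sum_(z : F) (((x == 0) && (z == 0))%:R * N) = (x == 0)%:R * N.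
  move=> x; rewrite (bigD1 0) //= eqxx andbT big1 ?addr0 // => z /negbTE ->.
  by rewrite andbF mul0r.
rewrite (eq_bigr _ (fun x _ => e x)) (bigD1 0) //= eqxx mul1r big1 ?addr0 // => x /negbTE ->.
by rewrite mul0r.
Qed.

Definition A : {set vec n} := [set y | [exists i : 'I_k, y \in H (lam i)]].
Definition B : {set vec n} := [set r | [exists i : 'I_k, r \in U (lam i)]].
Definition cnt (y : vec n) : nat := \sum_(i < k) (y \in H (lam i) : nat).
Definition Ey (y : vec n) : R := (cnt y)%:R - (y \in A)%:R.
Definition S (r : vec n) : R := \sum_(i < k) \sum_(y in H (lam i)) sgn R (ip r y).
Definition Err : R := \sum_y Ey y.

Lemma inA y : (y \in A) = (0 < cnt y)%N.
Proof.
rewrite inE /cnt; case: existsP => [[i hi]|hn].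
  by rewrite (bigD1 i) //= hi.
rewrite big1 // => i _; case: (boolP (y \in H (lam i))) => // hi.
by case: hn; exists i.
Qed.

Lemma Ey_ge0 y : 0 <= Ey y.
Proof.
rewrite /Ey inA; case: (cnt y) => [|m] /=; first by rewrite subr0.
by rewrite subr_ge0 ler1n.
Qed.

Lemma Ey_le y : Ey y <= (cnt y)%:R ^+ 2 - (cnt y)%:R.
Proof.
rewrite /Ey inA; case: (cnt y) => [|m] /=; first by rewrite expr0n /= subr0.
rewrite -natrX -!natrB //; last by rewrite expnS leq_pmulr ?expn_gt0.
rewrite ler_nat; nia.
Qed.

Lemma Err_ge0 : 0 <= Err.
Proof. by apply: sumr_ge0 => y _; apply: Ey_ge0. Qed.

Lemma indic_sq (b : bool) : ((b%:R : R) * b%:R) = b%:R.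
Proof. by case: b; rewrite ?mulr1 ?mulr0. Qed.

Lemma Err_bound : Err * (q * q) <= (k ^ 2)%N%:R * N.
Proof.
have h1 : Err <= \sum_y ((cnt y)%:R ^+ 2 - (cnt y)%:R).
  by apply: ler_sum => y _; apply: Ey_le.
have h2 : \sum_y (((cnt y)%:R ^+ 2 - (cnt y)%:R) : R) =
    \sum_(i < k) \sum_(j < k | j != i) \sum_y ((y \in H (lam i))%:R * (y \in H (lam j))%:R).
  transitivity (\sum_y \sum_(i < k) (\sum_(j < k) ((y \in H (lam i))%:R * (y \in H (lam j))%:R)
       - (y \in H (lam i))%:R) : R).
    apply: eq_bigr => y _; rewrite /cnt natr_sum expr2 mulr_suml -sumrB.
    by apply: eq_bigr => i _; rewrite mulr_sumr.
  rewrite exchange_big /=; apply: eq_bigr => i _.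
  rewrite sumrB exchange_big /=.
  rewrite (bigD1 i) //= (eq_bigr (fun y => ((y \in H (lam i))%:R : R))); last by move=> y _; rewrite indic_sq.
  by rewrite addrAC subrr add0r.
have h3 : (\sum_(i < k) \sum_(j < k | j != i) \sum_y ((y \in H (lam i))%:R * (y \in H (lam j))%:R : R)) * (q * q)
     = \sum_(i < k) \sum_(j < k | j != i) N.
  rewrite mulr_suml; apply: eq_bigr => i _; rewrite mulr_suml; apply: eq_bigr => j ji.
  by apply: card_HH; rewrite (inj_eq lam_inj) eq_sym.
have qq : 0 <= q * q by rewrite mulr_ge0.
apply: (le_trans (ler_wpM2r qq h1)); rewrite h2 h3.
rewrite (eq_bigr (fun _ => N *+ k.-1)); last first.
  move=> i _; rewrite sumr_const; congr (_ *+ _).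
  by rewrite cardC1 card_ord.
rewrite sumr_const card_ord -mulrnA -[X in X <= _]mulr_natl ler_wpM2r ?ler_nat //.
by rewrite expnS expn1 leq_mul2r leq_pred orbT.
Qed.

Lemma fourier_decomp r : fourier R A r = S r - \sum_y Ey y * sgn R (ip r y).
Proof.
rewrite /fourier /S big_mkcond /=.
have -> : \sum_(i < k) \sum_(y in H (lam i)) sgn R (ip r y) = \sum_y (cnt y)%:R * sgn R (ip r y).
  under eq_bigr do rewrite big_mkcond /=.
  rewrite exchange_big /=; apply: eq_bigr => y _.
  rewrite /cnt natr_sum mulr_suml; apply: eq_bigr => i _.
  by case: (y \in H (lam i)); rewrite ?mul1r ?mul0r.
rewrite -sumrB; apply: eq_bigr => y _; rewrite /Ey mulrBl.
by case: (y \in A) => /=; ring.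
Qed.

Lemma fourier_close r : `|fourier R A r - S r| <= Err.
Proof.
rewrite fourier_decomp addrC addKr normrN.
apply: (le_trans (ler_norm_sum _ _ _)); apply: ler_sum => y _.
by rewrite normrM norm_sgn mulr1 ger0_norm ?Ey_ge0.
Qed.

Lemma qS r : q * S r = N * \sum_(i < k) (r \in U (lam i))%:R.
Proof. by rewrite /S mulr_sumr mulr_sumr; apply: eq_bigr => i _; rewrite FH. Qed.

Lemma q_gt0 : 0 < q.
Proof. by rewrite ltr0n; apply/card_gt0P; exists 0. Qed.

Lemma S_B r : r \in B -> N <= q * S r.
Proof.
rewrite qS inE => /existsP [i hi].
by rewrite (bigD1 i) //= hi mulrDr mulr1 lerDl mulr_ge0 // sumr_ge0.
Qed.

Lemma S_nB r : r \notin B -> S r = 0.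
Proof.
move=> nB; have := qS r; rewrite big1 ?mulr0.
  by move/eqP; rewrite mulf_eq0 (negbTE (lt0r_neq0 q_gt0)) /= => /eqP.
move=> i _; case: (boolP (r \in U (lam i))) => // hi.
by case/negP: nB; rewrite inE; apply/existsP; exists i.
Qed.

Lemma card_A : #|A|%:R * q = (k%:R * N) - Err * q.
Proof.
have e : fourier R A (vzero n) = #|A|%:R.
  by rewrite /fourier (eq_bigr (fun _ => 1)) ?sumr_const // => y _; rewrite ip0l.
have := fourier_decomp (vzero n); rewrite e.
rewrite (eq_bigr (fun y => Ey y)); last by move=> y _; rewrite ip0l mulr1.
move=> ->; rewrite mulrBl -/Err; congr (_ - _).
rewrite mulrC qS (eq_bigr (fun _ => 1)).
  by rewrite sumr_const card_ord mulrC.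
by move=> i _; rewrite (_ : vzero n \in U (lam i)) //; apply/imsetP; exists 0 => //; rewrite phi0.
Qed.

Lemma sum_inB (v : vec n) : (\sum_(r in B) (v == r) : nat) = (v \in B).
Proof.
case: (boolP (v \in B)) => hv.
  by rewrite (bigD1 v) //= eqxx big1 // => r /andP [_ /negbTE]; rewrite eq_sym => ->.
by rewrite big1 // => r rB; case: eqP => // e; rewrite e rB in hv.
Qed.

Lemma cover (f : vec n -> nat) :
  (\sum_(r in B) f r <= \sum_(i < k) \sum_(x : F) f (phi (lam i) x))%N.
Proof.
have h1 : forall r, r \in B -> (f r <= \sum_(i < k) \sum_(x : F) ((phi (lam i) x == r) * f r))%N.
  move=> r; rewrite inE => /existsP [i /imsetP [x _ ->]].
  by rewrite (bigD1 i) //= (bigD1 x) //= eqxx mul1n -addnA leq_addr.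
apply: (leq_trans (leq_sum _ h1)).
rewrite exchange_big /=; apply: bigop.leq_sum => i _.
rewrite exchange_big /=; apply: bigop.leq_sum => x _.
apply: (@leq_trans (\sum_r ((phi (lam i) x == r) * f r))).
  by rewrite big_mkcond /=; apply: leq_sum => r _; case: (r \in B).
by rewrite (bigD1 (phi (lam i) x)) //= eqxx mul1n big1 ?addn0 // => r /negbTE; rewrite eq_sym => ->.
Qed.

Lemma card_B_le : (#|B| <= k * #|F|)%N.
Proof.
rewrite -sum1_card; apply: leq_trans (cover (fun _ => 1%N)) _.
by rewrite sum_nat_const card_ord; apply: leq_mul => //; rewrite sum_nat_const muln1.
Qed.

Lemma card_B_ge : (k * #|F|.-1 <= #|B|)%N.
Proof.
pose P := finset.setX [set: 'I_k] [set~ (0 : F)].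
pose g := fun p : 'I_k * F => phi (lam p.1) p.2.
have -> : (k * #|F|.-1 = #|P|)%N by rewrite cardsX cardsC1 cardsT card_ord.
have ginj : {in P &, injective g}.
  move=> [i x] [j y]; rewrite !inE /= /g => hx hy e.
  have hij : lam i = lam j.
    apply/eqP; apply: contraNT hx => hne.
    have := @pair_indep _ _ x y hne; rewrite e vaddvv => /(_ erefl) [-> _].
    by rewrite eqxx.
  have ij := lam_inj hij; subst j.
  by move: e => /= /phi_inj ->.
rewrite -(card_in_imset ginj); apply: subset_leq_card; apply/fintype.subsetP => r.
move=> /imsetP [[i x] _ ->]; rewrite inE; apply/existsP; exists i.
by apply/imsetP; exists x.
Qed.

Lemma vadd_sw1 (u a b a' b' : vec n) :
  vadd (vadd (vadd u a) b) (vadd (vadd u a') b') = vadd (vadd a a') (vadd b b').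
Proof. by apply/ffunP=> i; rewrite /vadd !ffunE; case: (u i); case: (a i); case: (b i); case: (a' i); case: (b' i). Qed.
Lemma vadd_sw2 (w a b a' b' : vec n) :
  vadd (vadd (vadd a b) w) (vadd (vadd a' b') w) = vadd (vadd a a') (vadd b b').
Proof. by apply/ffunP=> i; rewrite /vadd !ffunE; case: (w i); case: (a i); case: (b i); case: (a' i); case: (b' i). Qed.
Lemma vadd_sw3 (a b c a' b' c' : vec n) :
  vadd (vadd (vadd a b) c) (vadd (vadd a' b') c') = vadd (vadd (vadd a a') (vadd b b')) (vadd c c').
Proof. by apply/ffunP=> i; rewrite /vadd !ffunE; case: (c i); case: (c' i); case: (a i); case: (b i); case: (a' i); case: (b' i). Qed.

Lemma eqF_add (x y : F) : x + y = 0 -> x = y.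
Proof. by move=> h; apply/eqP; rewrite -subr_eq0 oppF h. Qed.

Lemma inj2_le (T1 T2 : finType) (f : T1 -> T2 -> vec n) :
  (forall y z y' z', f y z = f y' z' -> y = y' /\ z = z') ->
  (\sum_(y : T1) \sum_(z : T2) (f y z \in B : nat) <= #|B|)%N.
Proof.
move=> hf.
have -> : (\sum_(y : T1) \sum_(z : T2) (f y z \in B : nat) =
    \sum_(r in B) \sum_(y : T1) \sum_(z : T2) (f y z == r : nat))%N.
  rewrite [RHS]exchange_big /=; apply: eq_bigr => y _.
  rewrite [RHS]exchange_big /=; apply: eq_bigr => z _.
  by rewrite sum_inB.
rewrite -sum1_card; apply: bigop.leq_sum => r _.
apply: sum2_le1 => y z y' z' /eqP e1 /eqP e2; apply: hf; by rewrite e1 e2.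
Qed.

Definition N3 (a b c : F) : nat :=
  \sum_(x : F) \sum_(y : F) \sum_(z : F)
     (vadd (vadd (phi a x) (phi b y)) (phi c z) \in B : nat).

Lemma N3_C1 a b c : (N3 a b c <= #|F| ^ 3)%N.
Proof.
apply: (@leq_trans (\sum_(x : F) \sum_(y : F) \sum_(z : F) 1)).
  by apply: bigop.leq_sum => x _; apply: bigop.leq_sum => y _; apply: bigop.leq_sum => z _; case: (_ \in B).
have sc : forall m, (\sum_(x : F) m = #|F| * m)%N by move=> m; rewrite sum_nat_const.
by rewrite !sc muln1 !expnS expn0 muln1 mulnA.
Qed.

Lemma N3_C2 a b c : b != c -> (N3 a b c <= #|F| * #|B|)%N.
Proof.
move=> bc; rewrite /N3 -sum_nat_const; apply: bigop.leq_sum => x _.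
apply: inj2_le => y z y' z' e.
have := vaddvv (vadd (vadd (phi a x) (phi b y)) (phi c z)).
rewrite {2}e vadd_sw1 -!phi_add => /(pair_indep bc) [/eqF_add -> /eqF_add ->].
by [].
Qed.

Lemma N3_C3 a b c : a != b -> (N3 a b c <= #|F| * #|B|)%N.
Proof.
move=> ab.
have -> : N3 a b c = (\sum_(z : F) \sum_(x : F) \sum_(y : F)
     (vadd (vadd (phi a x) (phi b y)) (phi c z) \in B : nat))%N.
  by rewrite /N3; under eq_bigr => x _ do rewrite exchange_big /=; rewrite exchange_big.
rewrite -sum_nat_const; apply: leq_sum => z _.
apply: inj2_le => x y x' y' e.
have := vaddvv (vadd (vadd (phi a x) (phi b y)) (phi c z)).
rewrite {2}e vadd_sw2 -!phi_add => /(pair_indep ab) [/eqF_add -> /eqF_add ->].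
by [].
Qed.

Lemma N3_C4 a b c : a != b -> b != c -> a != c -> (N3 a b c <= #|B|)%N.
Proof.
move=> ab bc ac; rewrite /N3; under eq_bigr => x _ do rewrite pair_bigA /=.
apply: (inj2_le (f := fun x (p : F * F) => vadd (vadd (phi a x) (phi b p.1)) (phi c p.2))).
move=> x [y z] x' [y' z'] /= e.
have := vaddvv (vadd (vadd (phi a x) (phi b y)) (phi c z)).
rewrite {2}e vadd_sw3 -!phi_add => /(triple_indep ab bc ac) [/eqF_add -> /eqF_add -> /eqF_add ->].
by [].
Qed.

Lemma N3_bound (i j l : 'I_k) :
  (N3 (lam i) (lam j) (lam l) <= #|B| + ((i == j) + (j == l) + (i == l)) * (#|F| * #|B|)
     + ((i == j) && (j == l)) * #|F| ^ 3)%N.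
Proof.
have ne : forall u v : 'I_k, (u == v) = false -> lam u != lam v.
  by move=> u v h; rewrite (inj_eq lam_inj) h.
set X := (#|F| * #|B|)%N; set Y := (#|F| ^ 3)%N.
case ij: (i == j); case jl: (j == l); case il: (i == l) => /=.
- by have := N3_C1 (lam i) (lam j) (lam l); rewrite -/Y; lia.
- by move/eqP: ij => ij; move/eqP: jl => jl; subst; rewrite eqxx in il.
- by move/eqP: ij => ij; move/eqP: il => il; subst; rewrite eqxx in jl.
- by have := N3_C2 (lam i) (ne _ _ jl); rewrite -/X; lia.
- by move/eqP: jl => jl; move/eqP: il => il; subst; rewrite eqxx in ij.
- by have := N3_C3 (lam l) (ne _ _ ij); rewrite -/X; lia.
- by have := N3_C3 (lam l) (ne _ _ ij); rewrite -/X; lia.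
- by move: (N3_C4 (ne _ _ ij) (ne _ _ jl) (ne _ _ il)) => h; apply: (leq_trans h); rewrite -addnA leq_addr.
Qed.



Lemma vadd_solve (r1 r2 r3 r4 : vec n) : vadd r1 r2 = vadd r3 r4 -> r4 = vadd (vadd r1 r2) r3.
Proof.
move=> e; rewrite e; apply/ffunP=> i; rewrite /vadd !ffunE.
by case: (r3 i); case: (r4 i).
Qed.

Definition T3 : {set vec n * vec n * vec n} :=
  [set t | [&& t.1.1 \in B, t.1.2 \in B, t.2 \in B & vadd (vadd t.1.1 t.1.2) t.2 \in B]].

Lemma T2_T3 : (T2 B <= #|T3|)%N.
Proof.
rewrite /T2.
set S4 := [set q : vec n * vec n * vec n * vec n | _].
have inj : {in S4 &, injective (fun q => q.1)}.
  move=> [[[a b] c] e] [[[a' b'] c'] e']; rewrite !inE /= => /and5P [_ _ _ _ /eqP h]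
    /and5P [_ _ _ _ /eqP h'] /= [ea eb ec]; subst a' b' c'.
  by rewrite (vadd_solve h) (vadd_solve h') .
rewrite -(card_in_imset inj); apply: subset_leq_card; apply/fintype.subsetP => t.
move=> /imsetP [[[[a b] c] e] /= + ->]; rewrite !inE /= => /and5P [ha hb hc he /eqP h].
by rewrite ha hb hc /= -(vadd_solve h).
Qed.

Lemma T3_sum : #|T3| =
  (\sum_(r1 in B) \sum_(r2 in B) \sum_(r3 in B) (vadd (vadd r1 r2) r3 \in B : nat))%N.
Proof.
rewrite pair_big /= pair_big /=.
rewrite -sum1_card big_mkcond [RHS]big_mkcond /=; apply: eq_bigr => t _.
by rewrite inE; case: (t.1.1 \in B); case: (t.1.2 \in B); case: (t.2 \in B).
Qed.



Lemma split3 (G1 G2 : 'I_k -> 'I_k -> 'I_k -> nat) :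
  (\sum_i \sum_j \sum_l (G1 i j l + G2 i j l) =
   \sum_i \sum_j \sum_l G1 i j l + \sum_i \sum_j \sum_l G2 i j l)%N.
Proof.
rewrite -big_split; apply: eq_bigr => i _; rewrite -big_split; apply: eq_bigr => j _.
by rewrite -big_split.
Qed.

Lemma sum_eq_l (i : 'I_k) c : (\sum_(j < k) (i == j) * c = c)%N.
Proof.
by rewrite (bigD1 i) //= eqxx mul1n big1 ?addn0 // => j /negbTE; rewrite eq_sym => ->.
Qed.
Lemma sum_eq_r (i : 'I_k) c : (\sum_(j < k) (j == i) * c = c)%N.
Proof.
by rewrite (bigD1 i) //= eqxx mul1n big1 ?addn0 // => j /negbTE ->.
Qed.
Lemma sum_constk c : (\sum_(j < k) c = k * c)%N.
Proof. by rewrite sum_nat_const card_ord. Qed.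

Lemma T2_bound :
  (T2 B <= k * (k * (k * #|B|)) + 3 * (k * (k * (#|F| * #|B|))) + k * #|F| ^ 3)%N.
Proof.
apply: (leq_trans T2_T3); rewrite T3_sum.
set X := (#|F| * #|B|)%N; set Y := (#|F| ^ 3)%N.
have step1 : (\sum_(r1 in B) \sum_(r2 in B) \sum_(r3 in B) (vadd (vadd r1 r2) r3 \in B : nat) <=
   \sum_(i < k) \sum_(x : F) \sum_(j < k) \sum_(y : F) \sum_(l < k) \sum_(z : F)
     (vadd (vadd (phi (lam i) x) (phi (lam j) y)) (phi (lam l) z) \in B : nat))%N.
  apply: (leq_trans (cover _)); apply: leq_sum => i _; apply: leq_sum => x _.
  apply: (leq_trans (cover _)); apply: leq_sum => j _; apply: leq_sum => y _.
  exact: cover.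
apply: (leq_trans step1).
have step2 : (\sum_(i < k) \sum_(x : F) \sum_(j < k) \sum_(y : F) \sum_(l < k) \sum_(z : F)
     (vadd (vadd (phi (lam i) x) (phi (lam j) y)) (phi (lam l) z) \in B : nat) =
   \sum_(i < k) \sum_(j < k) \sum_(l < k) N3 (lam i) (lam j) (lam l))%N.
  apply: eq_bigr => i _; rewrite exchange_big /=; apply: eq_bigr => j _.
  rewrite /N3; under eq_bigr => x _ do rewrite exchange_big /=.
  by rewrite exchange_big.
rewrite step2.
apply: (leq_trans (leq_sum _ (fun i _ => leq_sum _ (fun j _ => leq_sum _ (fun l _ => N3_bound i j l))))).
rewrite !split3.
have -> : (\sum_(i < k) \sum_(j < k) \sum_(l < k) #|B| = k * (k * (k * #|B|)))%N.
  by rewrite !sum_constk.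
have -> : (\sum_(i < k) \sum_(j < k) \sum_(l < k) (((i == j) + (j == l) + (i == l)) * X)
     = 3 * (k * (k * X)))%N.
  under eq_bigr => i _ do under eq_bigr => j _ do under eq_bigr => l _ do rewrite !mulnDl.
  rewrite !split3.
  have -> : (\sum_(i < k) \sum_(j < k) \sum_(l < k) ((i == j) * X) = k * (k * X))%N.
    under eq_bigr => i _ do under eq_bigr => j _ do rewrite sum_constk.
    under eq_bigr => i _ do rewrite -big_distrr /= sum_eq_l.
    by rewrite sum_constk.
  have -> : (\sum_(i < k) \sum_(j < k) \sum_(l < k) ((j == l) * X) = k * (k * X))%N.
    under eq_bigr => i _ do under eq_bigr => j _ do rewrite sum_eq_l.
    by rewrite !sum_constk.
  have -> : (\sum_(i < k) \sum_(j < k) \sum_(l < k) ((i == l) * X) = k * (k * X))%N.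
    under eq_bigr => i _ do under eq_bigr => j _ do rewrite sum_eq_l.
    by rewrite !sum_constk.
  lia.
have -> : (\sum_(i < k) \sum_(j < k) \sum_(l < k) (((i == j) && (j == l)) * Y) = k * Y)%N.
  have e : forall i j l : 'I_k, (((i == j) && (j == l)) * Y = (i == j) * ((j == l) * Y))%N.
    by move=> i j l; case: (i == j); case: (j == l); rewrite /= ?mul1n ?mul0n.
  under eq_bigr => i _ do under eq_bigr => j _ do under eq_bigr => l _ do rewrite e.
  under eq_bigr => i _ do under eq_bigr => j _ do rewrite -big_distrr /= sum_eq_l.
  under eq_bigr => i _ do rewrite sum_eq_l.
  by rewrite sum_constk.
by [].
Qed.

End Construction.

Lemma pow2E (R : realType) n : ((2 ^+ n)%:R : R) = (2 ^ n)%N%:R.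
Proof. congr (_%:R); elim: n => // n ih; rewrite exprS ih expnS. Qed.

Lemma num_T2 (R : realType) (a dl q kr b t : R) :
  0 < a -> 0 < dl -> 32 * dl ^+ 2 <= a -> a <= dl / 2 -> 0 < q -> 2 * a * q <= 1 ->
  0 <= kr -> kr <= 5 * dl * q -> 0 <= b -> b <= kr * q ->
  t <= kr ^+ 3 * b + 3 * (kr ^+ 2 * (q * b)) + kr * q ^+ 3 ->
  t <= 16 * dl / a ^+ 4.
Proof.
move=> a0 d0 hda had q0 haq k0 k5 b0 bk ht.
have q0' : 0 <= q := ltW q0.
have a0' : 0 <= a := ltW a0.
have d0' : 0 <= dl := ltW d0.
set u := a * q.
have u0 : 0 < u by rewrite mulr_gt0.
have u1 : u <= 1/2 by rewrite /u; lra.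
set c := kr / q.
have ekr : kr = c * q by rewrite /c mulfVK // lt0r_neq0.
have c0 : 0 <= c by rewrite /c divr_ge0 // ltW.
have c5 : c <= 5 * dl by rewrite /c ler_pdivrMr //.
have ht2 : t <= c ^+ 4 * q ^+ 5 + 3 * (c ^+ 3 * q ^+ 5) + c * q ^+ 4.
  apply: (le_trans ht); rewrite ekr.
  have hb : b <= c * q * q by rewrite -ekr.
  have e1 : (c * q) ^+ 3 * b <= c ^+ 4 * q ^+ 5.
    have p : 0 <= (c * q) ^+ 3 by apply/exprn_ge0/mulr_ge0.
    have := ler_wpM2l p hb; move=> h; apply: le_trans h _.
    by rewrite le_eqVlt; apply/orP; left; apply/eqP; ring.
  have e2 : (c * q) ^+ 2 * (q * b) <= c ^+ 3 * q ^+ 5.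
    have : (c * q) ^+ 2 * q * b <= (c * q) ^+ 2 * q * (c * q * q).
      have p2 : 0 <= (c * q) ^+ 2 * q by apply: mulr_ge0 => //; apply/exprn_ge0/mulr_ge0.
      exact: (ler_wpM2l p2 hb).
    move=> h; rewrite mulrA; apply: le_trans h _.
    by rewrite le_eqVlt; apply/orP; left; apply/eqP; ring.
  have e3 : c * q * q ^+ 3 = c * q ^+ 4 by ring.
  lra.
rewrite ler_pdivlMr ?exprn_gt0 //.
apply: le_trans (ler_wpM2r _ ht2) _; first by rewrite exprn_ge0.
have eu4 : q ^+ 4 * a ^+ 4 = u ^+ 4 by rewrite /u; ring.
have eu5 : q ^+ 5 * a ^+ 4 = u ^+ 4 * q by rewrite /u; ring.
have u4 : u ^+ 4 <= 1/16.
  have : u ^+ 4 <= (1/2) ^+ 4 by rewrite lerXn2r // ?nnegrE ?ltW //; lra.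
  move=> h; apply: le_trans h _.
  by rewrite (_ : (1/2 : R) ^+ 4 = 1/16) //; rewrite !exprS expr0; field.
have c3q : c ^+ 3 * q <= 125 * dl / 64.
  have h1 : c ^+ 3 <= (5 * dl) ^+ 3 by rewrite lerXn2r // nnegrE ?mulr_ge0.
  have h2 : dl ^+ 2 * q <= u / 32.
    rewrite /u ler_pdivlMr //; have := ler_wpM2r q0' hda; lra.
  have h3 : c ^+ 3 * q <= (5 * dl) ^+ 3 * q by rewrite ler_wpM2r.
  apply: le_trans h3 _.
  have -> : (5 * dl) ^+ 3 * q = 125 * dl * (dl ^+ 2 * q) by ring.
  have h4 : 125 * dl * (dl ^+ 2 * q) <= 125 * dl * (u / 32).
    by rewrite ler_wpM2l // mulr_ge0.
  apply: le_trans h4 _; nra.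
have c4q : c ^+ 4 * q <= 5 * dl * (125 * dl / 64).
  have -> : c ^+ 4 * q = c * (c ^+ 3 * q) by ring.
  apply: ler_pM => //; first by rewrite mulr_ge0 // exprn_ge0.
have dl1 : dl <= 1 / 64.
  have : 64 * dl ^+ 2 <= dl by lra.
  rewrite expr2 => h.
  have : 64 * dl <= 1.
    by rewrite -(ler_pM2r d0) mul1r -mulrA; apply: le_trans h; rewrite mulrA.
  lra.
have inner : c ^+ 4 * q + 3 * (c ^+ 3 * q) + c <= 256 * dl.
  have : 5 * dl * (125 * dl / 64) <= 5 * (1/64) * (125 * dl / 64).
    by rewrite ler_wpM2r ?mulr_ge0 ?divr_ge0 //; lra.
  lra.
have -> : (c ^+ 4 * q ^+ 5 + 3 * (c ^+ 3 * q ^+ 5) + c * q ^+ 4) * a ^+ 4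
   = u ^+ 4 * (c ^+ 4 * q + 3 * (c ^+ 3 * q) + c) by rewrite /u; ring.
have i0 : 0 <= c ^+ 4 * q + 3 * (c ^+ 3 * q) + c.
  have p4 : 0 <= c ^+ 4 * q := mulr_ge0 (exprn_ge0 _ c0) q0'.
  have p3 : 0 <= c ^+ 3 * q := mulr_ge0 (exprn_ge0 _ c0) q0'.
  lra.
have := ler_pM (exprn_ge0 4 (ltW u0)) i0 u4 inner.
lra.
Qed.

Lemma finish (R : realType) (n : nat) (delta alpha : R) (F : finFieldType) (d k : nat)
  (bn : F -> nat -> bool) (lam : 'I_k -> F) :
  (forall x y j, bn (x + y) j = xorb (bn x j) (bn y j)) ->
  (forall x, (forall j, (j < d)%N -> bn x j = false) -> x = 0) ->
  (3 * d <= n)%N -> injective lam ->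
  0 < delta -> 0 < alpha -> 32 * delta ^+ 2 <= alpha -> alpha <= delta / 2 ->
  2 * alpha * #|F|%:R <= 1 -> 1 < 4 * alpha * #|F|%:R -> 3 <= (#|F|%:R : R) ->
  3 * delta * #|F|%:R <= k%:R -> k%:R <= 5 * delta * #|F|%:R ->
  exists A : {set vec n},
    [/\ delta * (2 ^+ n)%:R <= (#|A|)%:R,
        (#|A|)%:R <= 8 * delta * (2 ^+ n)%:R,
        (#|spec alpha A|)%:R >= delta / (8 * alpha ^+ 2) &
        ((T2 (spec alpha A))%:R : R) <= 16 * delta / alpha ^+ 4].
Proof.
move=> bnD bn0 hdn lam_inj d0 a0 hda had haq h4aq q3 k3 k5.
exists (A d n bn lam).
rewrite !pow2E.
set N : R := (2 ^ n)%N%:R.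
set q : R := #|F|%:R.
set kr : R := k%:R.
set Ar : R := (#|A d n bn lam|)%:R.
set E := Err d n bn lam R.
have N0 : 0 < N by rewrite ltr0n expn_gt0.
have q0 : 0 < q := q_gt0 F R.
have qq0 : 0 < q * q by rewrite mulr_gt0.
have hA : Ar * q = kr * N - E * q := card_A bnD bn0 hdn lam R.
have hE : E * (q * q) <= kr ^+ 2 * N.
  by have := Err_bound bnD bn0 hdn lam_inj R; rewrite natrX.
have E0 : 0 <= E := Err_ge0 d n bn lam R.
have dl1 : delta <= 1 / 64.
  have : 64 * delta ^+ 2 <= delta by lra.
  rewrite expr2 => h.
  have : 64 * delta <= 1.
    by rewrite -(ler_pM2r d0) mul1r -mulrA; apply: le_trans h; rewrite mulrA.
  lra.
have kr0 : 0 <= kr by rewrite ler0n.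
have kq : kr <= q by nra.
have G1 : delta * N <= Ar.
  rewrite -(ler_pM2r qq0).
  have e1 : Ar * (q * q) = kr * N * q - E * (q * q).
    by rewrite mulrA hA; ring.
  rewrite e1.
  have h1 : delta * (q * q) <= kr * q - kr ^+ 2.
    have s1 : 3 * delta * q * (q - kr) <= kr * (q - kr) by apply: ler_wpM2r; rewrite ?subr_ge0.
    have s2 : 3 * delta * q * (q - 5 * delta * q) <= 3 * delta * q * (q - kr).
      apply: ler_wpM2l; first by rewrite !mulr_ge0 // ltW.
      by rewrite lerB.
    nra.
  have h2 : delta * (q * q) * N <= (kr * q - kr ^+ 2) * N by apply: ler_wpM2r => //; apply: ltW.
  nra.
have G2 : Ar <= 8 * delta * N.
  rewrite -(ler_pM2r q0) hA.
  have : kr * N <= 5 * delta * q * N by apply: ler_wpM2r => //; apply: ltW.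
  have : 0 <= E * q by rewrite mulr_ge0 // ltW.
  nra.
have ErrB : E <= 25 / 32 * alpha * N.
  rewrite -(ler_pM2r qq0); apply: le_trans hE _.
  have : kr ^+ 2 <= (5 * delta * q) ^+ 2 by rewrite lerXn2r // nnegrE // !mulr_ge0 // ltW.
  move=> h; have : kr ^+ 2 * N <= (5 * delta * q) ^+ 2 * N by apply: ler_wpM2r => //; apply: ltW.
  have : 25 * delta ^+ 2 * (q * q) * N <= 25 / 32 * alpha * (q * q) * N.
    apply: ler_wpM2r; first exact: ltW.
    apply: ler_wpM2r; first exact: ltW.
    lra.
  have -> : (5 * delta * q) ^+ 2 = 25 * delta ^+ 2 * (q * q) by ring.
  nra.
have spB : spec alpha (A d n bn lam) = B d n bn lam.
  apply/setP => r; rewrite inE pow2E -/N.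
  have hc := fourier_close d bn lam R r.
  rewrite ler_distl in hc; case/andP: hc => hc1 hc2; rewrite -/E in hc1 hc2.
  case: (boolP (r \in B d n bn lam)) => hr.
    have hS := S_B bnD bn0 hdn R hr.
    have hS2 : 2 * alpha * N <= S d bn lam R r.
      rewrite -(ler_pM2l q0); apply: le_trans hS.
      have : q * (2 * alpha) * N <= 1 * N by apply: ler_wpM2r; [exact: ltW| rewrite mulrC].
      nra.
    apply: (le_trans _ (ler_norm _)); lra.
  apply/negbTE; rewrite -ltNge.
  have hS := S_nB bnD bn0 hdn R hr.
  rewrite ltr_norml; apply/andP; split; nra.
rewrite spB.
have cB := card_B_le d n bn lam.
have cBr : (#|B d n bn lam|)%:R <= kr * q by rewrite -natrM ler_nat.
have cB2 := card_B_ge bnD bn0 hdn lam_inj.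
have cB2r : kr * (q - 1) <= (#|B d n bn lam|)%:R.
  have c1 : (0 < #|F|)%N by apply/card_gt0P; exists 0.
  have e : (#|F|.-1)%:R = q - 1 by rewrite -subn1 natrB.
  by rewrite -e -natrM ler_nat.
split => //.
- rewrite ler_pdivrMr; last by rewrite mulr_gt0 // exprn_gt0.
  set b := (#|B d n bn lam|)%:R in cB2r *.
  have s1 : 3 * delta * q * (q - 1) <= kr * (q - 1) by apply: ler_wpM2r => //; lra.
  have s2 : 2 * delta * (q * q) <= 3 * delta * q * (q - 1).
    have : 0 <= delta * q * (q - 3) by rewrite mulr_ge0 ?mulr_ge0 ?subr_ge0 // ltW.
    nra.
  have s3 : 1 <= 16 * alpha ^+ 2 * (q * q).
    have : 1 * 1 <= (4 * alpha * q) * (4 * alpha * q) by apply: ler_pM => //; lra.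
    have -> : 4 * alpha * q * (4 * alpha * q) = 16 * alpha ^+ 2 * (q * q) by ring.
    by rewrite mulr1.
  have s4 : 2 * delta * (q * q) * (8 * alpha ^+ 2) <= b * (8 * alpha ^+ 2).
    apply: ler_wpM2r; first by rewrite mulr_ge0 // exprn_ge0 // ltW.
    lra.
  have e : 2 * delta * (q * q) * (8 * alpha ^+ 2) = delta * (16 * alpha ^+ 2 * (q * q)) by ring.
  have : delta * 1 <= delta * (16 * alpha ^+ 2 * (q * q)) by apply: ler_wpM2l => //; exact: ltW.
  lra.
- apply: (num_T2 a0 d0 hda had q0 haq kr0 k5 _ cBr); first exact: ler0n.
  have := T2_bound bnD bn0 hdn lam_inj.
  rewrite -(ler_nat R) !natrD !natrM ?natrX -/kr -/q => h; apply: le_trans h _.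
  by rewrite le_eqVlt; apply/orP; left; apply/eqP; ring.
Qed.

Lemma F2_xor (a b : 'F_2) : (a + b != 0) = xorb (a != 0) (b != 0).
Proof. by case: a => [[|[|?]] ?] //; case: b => [[|[|?]] ?]. Qed.

Lemma field_bits (d : nat) : (0 < d)%N ->
  exists (F : finFieldType) (bn : F -> nat -> bool),
    [/\ #|F| = (2 ^ d)%N, (forall x y j, bn (x + y) j = xorb (bn x j) (bn y j))
      & (forall x, (forall j, (j < d)%N -> bn x j = false) -> x = 0)].
Proof.
move=> d0.
have [Fm ch cF] := @pPrimePowerField 2 d (isT : prime 2) d0.
pose Rp := pPrimeCharType ch.
have [v2r lin bij] := pprimeChar_vectAxiom ch.
have cR : #|Rp| = (2 ^ d)%N by [].
set D := logn 2 #|Rp| in v2r lin bij.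
have hD : D = d by rewrite /D cR pfactorK.
have v2rD : forall x y : Rp, v2r (x + y) = v2r x + v2r y.
  by move=> x y; have := lin 1 x y; rewrite !scale1r.
have v2r0 : v2r 0 = 0.
  have := v2rD 0 0; rewrite addr0 => h.
  by apply/esym/(@addrI _ (v2r 0)); rewrite addr0 -h.
have v2r_inj : injective v2r by apply: bij_inj.
exists Fm; exists (fun (x : Fm) j => if (insub j : option 'I_D) is Some u then v2r x 0 u != 0 else false).
split => //.
- move=> x y j; case: insubP => [u _ _|_] //.
  by rewrite (v2rD x y) mxE F2_xor.
- move=> x hx; apply: v2r_inj; rewrite v2r0; apply/rowP => u; rewrite mxE.
  have := hx (val u); rewrite -hD ltn_ord valK => /(_ isT) /negbFE /eqP.
  by [].
Qed.

Lemma pow2_ge (R : realType) m : (4 <= m)%N -> 16 <= (2 : R) ^+ m.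
Proof.
move=> hm; rewrite -(subnK hm) exprD.
have -> : (2 : R) ^+ 4 = 16 by rewrite !exprS expr0; lra.
have : 1 <= (2 : R) ^+ (m - 4) by rewrite exprn_ege1 //; lra.
move=> h; have := ler_wpM2r (ler0n _ 16) h; rewrite mul1r mulrC.
by [].
Qed.

Unset Implicit Arguments.
Theorem theorem28 (R : realType) (n : nat) (delta alpha : R) :
  (0 < n)%N ->
  0 < delta <= 1 -> 0 < alpha <= 1 ->
  32 * delta ^+ 2 <= alpha -> alpha <= delta / 2 ->
  ((2 ^+ n)%:R : R) `^ (- (2 ^- 300)) <= alpha ->
  alpha <= 2 ^- 30 ->
  (delta / alpha) * log2 (1 / (2 * alpha))
    >= 400 * log2 (2 ^+ n)%:R * log2 (8 * log2 (2 ^+ n)%:R) ->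
  exists A : {set vec n},
    [/\ delta * (2 ^+ n)%:R <= (#|A|)%:R,
        (#|A|)%:R <= 8 * delta * (2 ^+ n)%:R,
        (#|spec alpha A|)%:R >= delta / (8 * alpha ^+ 2) &
        ((T2 (spec alpha A))%:R : R) <= 16 * delta / alpha ^+ 4].
Proof.
move=> n0 /andP [d0 d1] /andP [a0 a1] hda had hpow ha30 _.
have dl1 : delta <= 1 / 64.
  have : 64 * delta ^+ 2 <= delta by lra.
  rewrite expr2 => h.
  have : 64 * delta <= 1.
    by rewrite -(ler_pM2r d0) mul1r -mulrA; apply: le_trans h; rewrite mulrA.
  lra.
have a16 : alpha <= 1 / 16.
  apply: le_trans ha30 _; rewrite div1r lef_pV2 ?posrE ?exprn_gt0 //.
  exact: pow2_ge.
set X := (2 * alpha)^-1.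
have a2 : 0 < 2 * alpha by lra.
have eX : 2 * alpha * X = 1 by rewrite /X mulfV // lt0r_neq0.
have X0 : 0 < X by rewrite /X invr_gt0.
have X8 : 8 <= X.
  rewrite -(ler_pM2l a2) eX; lra.
have [tX Xt] := andP (truncn_itv (ltW X0)).
set t := Num.truncn X in tX Xt.
have t0 : (0 < t)%N.
  rewrite lt0n; apply/eqP => t0; rewrite t0 /= in Xt; lra.
have [ht1 ht2] := andP (trunc_log_bounds (isT : (1 < 2)%N) t0).
set d := trunc_log 2 t in ht1 ht2.
set q : R := (2 ^ d)%N%:R.
have qX : q <= X by apply: le_trans tX; rewrite ler_nat.
have Xq : X < 2 * q.
  apply: lt_le_trans Xt _; rewrite /q -natrM ler_nat -expnS; exact: ht2.
have q0 : 0 < q by rewrite ltr0n expn_gt0.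
have haq : 2 * alpha * q <= 1 by have := ler_wpM2l (ltW a2) qX; rewrite eX.
have h4aq : 1 < 4 * alpha * q.
  have : 2 * alpha * X < 2 * alpha * (2 * q) by rewrite ltr_pM2l.
  rewrite eX; lra.
have q3 : 3 <= q by lra.
have dpos : (0 < d)%N.
  rewrite lt0n; apply/eqP => d0'; move: q3; rewrite /q d0' expn0; lra.
have h3d : (3 * d <= n)%N.
  rewrite pow2E in hpow.
  set NN : R := (2 ^ n)%N%:R in hpow.
  set c : R := 2 ^- 300 in hpow.
  have NN1 : 1 <= NN by rewrite ler1n expn_gt0.
  have NN0 : 0 < NN by lra.
  have c0 : 0 < c by rewrite /c invr_gt0 exprn_gt0.
  have c3 : c * 3%:R <= 1.
    have : 16 <= (2 : R) ^+ 300 by apply: pow2_ge.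
    move=> h; have : c <= 1 / 16.
      by rewrite /c div1r lef_pV2 ?posrE ?exprn_gt0.
    lra.
  set P := NN `^ c.
  have P0 : 0 < P by rewrite /P powR_gt0.
  rewrite powRN -/P in hpow.
  have aP : 1 <= alpha * P.
    have := ler_wpM2r (ltW P0) hpow; rewrite mulVf ?lt0r_neq0 //.
  have qP : q <= P.
    apply: le_trans qX _.
    have : X * 1 <= X * (alpha * P) by apply: ler_wpM2l => //; exact: ltW.
    have : X * (alpha * P) <= X * (2 * (alpha * P)).
      apply: ler_wpM2l; first exact: ltW.
      have : 0 <= alpha * P by rewrite mulr_ge0 // ltW.
      lra.
    have -> : X * (2 * (alpha * P)) = (2 * alpha * X) * P by ring.
    rewrite eX; lra.
  have q3P : q ^+ 3 <= P ^+ 3 by rewrite lerXn2r ?nnegrE ?(ltW q0) ?(ltW P0).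
  have PN : P ^+ 3 <= NN.
    rewrite -(powR_mulrn 3 (ltW P0)) /P -powRrM.
    have e1 : NN `^ 1 = NN := powRr1 (ltW NN0).
    by have := ler_powR NN1 c3; rewrite e1.
  have : ((2 ^ d) ^ 3)%N%:R <= NN by rewrite natrX; apply: le_trans q3P PN.
  by rewrite /NN ler_nat -expnM leq_exp2l // mulnC.
have [F [bn [cF bnD bn0]]] := field_bits dpos.
have qF : q = #|F|%:R by rewrite cF.
have h5 : (0 : R) < 5 by lra.
have [kt tk] := andP (truncn_itv (ltW (mulr_gt0 (mulr_gt0 h5 d0) q0))).
set k := Num.truncn (5 * delta * q) in kt tk.
have k3 : 3 * delta * q <= k%:R.
  have : 1 <= 2 * delta * q.
    have : 2 * alpha * q <= delta * q by apply: ler_wpM2r; [exact: ltW | lra].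
    lra.
  rewrite -natr1 in tk; lra.
have kF : (k <= #|F|)%N.
  rewrite -(ler_nat R) -qF; apply: le_trans kt _.
  have : 0 <= q * delta by rewrite mulr_ge0 // ltW.
  nra.
pose lam := fun i : 'I_k => enum_val (widen_ord kF i).
have lam_inj : injective lam.
  by move=> i j /enum_val_inj /(congr1 val) /= /val_inj.
rewrite qF in haq h4aq q3 k3 kt.
have h3d' : (3 * d <= n)%N := h3d.
exact: (finish bnD bn0 h3d' lam_inj d0 a0 hda had haq h4aq q3 k3 kt).
Qed.
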